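(* Let $n=3$ agents all have budget $1$, let all goods have positive costs, and let $\mathbf X=(X_1,X_2,X_3)$ be a budget-feasible allocation. Let $s_1,s_2,s_3\ge 0$ be such that $v_i(g)\le s_i$ for every agent $i$ and every good $g\in X_1\cup X_2\cup X_3$. Then there exists a budget-feasible allocation $\mathbf Y=(Y_1,Y_2,Y_3)$ that is EFx (with respect to budgets), with $Y_1\cup Y_2\cup Y_3\subseteq X_1\cup X_2\cup X_3$, and a labeling $\{i,j,k\}=\{1,2,3\}$ of the agents such that $$v_i(Y_i)\ge \frac{v_i(X_i)}{9}-\frac{s_i}{3},\qquad v_j(Y_j)\ge \frac{v_j(X_j)}{9}-\frac{2s_j}{3},\qquad v_k(Y_k)\ge\frac{v_k(X_k)}{9}-s_k.$$
   Context: Goods have costs $c(g)>0$, $c(S)=\sum_{g\in S}c(g)$; agents have additive nonnegative valuations. An allocation is a tuple of pairwise disjoint sets of goods (not all goods need be allocated); it is budget-feasible if $c(X_i)\le B_i$ for all $i$. An allocation $\mathbf X$ is EFx (with respect to budgets) if for all agents $i\ne j$, every $S\subseteq X_j$ with $c(S)\le B_i$ and every $g\in S$, $v_i(X_i)\ge v_i(S\setminus\{g\})$. *)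

(* Defs.v *)
From mathcomp Require Import all_boot all_order all_algebra.
Set Implicit Arguments. Unset Strict Implicit. Unset Printing Implicit Defensive.
Import Order.TTheory GRing.Theory Num.Theory.
Local Open Scope ring_scope.

Definition setval {R : realFieldType} {G : finType} (f : G -> R) (S : {set G}) : R :=
  \sum_(g in S) f g.

Definition is_allocation {G : finType} {n : nat} (X : 'I_n -> {set G}) : Prop :=
  forall i j : 'I_n, i != j -> [disjoint X i & X j].

Definition budget_feasible {R : realFieldType} {G : finType} {n : nat}
  (c : G -> R) (B : 'I_n -> R) (X : 'I_n -> {set G}) : Prop :=
  forall i, setval c (X i) <= B i.

Definition EFx {R : realFieldType} {G : finType} {n : nat}
  (c : G -> R) (B : 'I_n -> R) (v : 'I_n -> G -> R) (X : 'I_n -> {set G}) : Prop :=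
  forall i j : 'I_n, i != j ->
  forall S : {set G}, S \subset X j -> setval c S <= B i ->
  forall g, g \in S -> setval (v i) (S :\ g) <= setval (v i) (X i).

(* Main.v *)
Require Import Defs.
From mathcomp Require Import all_boot all_order all_algebra.
From mathcomp Require Import lra.
From Stdlib Require Classical_Prop.
Set Implicit Arguments. Unset Strict Implicit.
Import Order.TTheory GRing.Theory Num.Theory.
Local Open Scope ring_scope.

Lemma ex_max (R : realDomainType) (T : finType) (P : T -> Prop) (f : T -> R) (x0 : T) :
  P x0 -> exists x, P x /\ forall y, P y -> f y <= f x.
Proof.
move=> Px0.
suff: forall s : seq T, exists x, P x /\ forall y, y \in s -> P y -> f y <= f x.
  case/(_ (enum T)) => x [Px H]; exists x; split=> // y Py; apply: H => //; exact: mem_enum.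
elim=> [|a s [x [Px H]]]; first by exists x0; split.
case: (Classical_Prop.classic (P a)) => Pa.
- case: (leP (f a) (f x)) => hax.
  + exists x; split=> // y; rewrite in_cons => /orP [/eqP -> //|ys] Py; exact: H.
  + exists a; split=> // y; rewrite in_cons => /orP [/eqP -> //|ys] Py.
    exact: le_trans (H _ ys Py) (ltW hax).
- exists x; split=> // y; rewrite in_cons => /orP [/eqP ->|ys] Py; last exact: H.
  by case: (Pa Py).
Qed.

Section SV.
Variables (R : realFieldType) (G : finType).

Lemma setval_ge0 (f : G -> R) (S : {set G}) : (forall g, 0 <= f g) -> 0 <= setval f S.
Proof. by move=> h; rewrite /setval sumr_ge0. Qed.

Lemma setval_sub (f : G -> R) (A B : {set G}) : (forall g, 0 <= f g) -> A \subset B ->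
  setval f A <= setval f B.
Proof.
move=> h AB; rewrite /setval [X in _ <= X](big_setID A) /= (setIidPr AB) lerDl.
exact: sumr_ge0.
Qed.

Lemma setvalD1 (f : G -> R) (S : {set G}) g : g \in S -> setval f S = f g + setval f (S :\ g).
Proof. by move=> gS; rewrite /setval (big_setD1 g gS). Qed.

Lemma setvalU (f : G -> R) (A B : {set G}) : (forall g, 0 <= f g) ->
  setval f (A :|: B) <= setval f A + setval f B.
Proof.
move=> h; rewrite [X in X <= _]/setval (big_setID A) /=.
rewrite (setIidPr (subsetUl A B)) lerD2l.
apply: setval_sub => //; apply/subsetP => x; rewrite !inE => /andP [/negbTE -> /=] //.
Qed.

Lemma disj_intro (A B : {set G}) : (forall x, x \in A -> x \in B -> False) ->
  [disjoint A & B].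
Proof.
move=> H; rewrite disjoint_subset; apply/subsetP => x xA; rewrite inE.
by apply/negP => xB; exact: H x xA xB.
Qed.
End SV.

Theorem mainTheorem7 (R : realFieldType) (G : finType)
  (c : G -> R) (v : 'I_3 -> G -> R) (X : 'I_3 -> {set G}) (s : 'I_3 -> R) :
  (forall g, 0 < c g) ->
  (forall i g, 0 <= v i g) ->
  is_allocation X ->
  budget_feasible c (fun _ => 1) X ->
  (forall i, 0 <= s i) ->
  (forall i g, g \in \bigcup_(l < 3) X l -> v i g <= s i) ->
  exists Y : 'I_3 -> {set G},
    [/\ is_allocation Y, budget_feasible c (fun _ => 1) Y, EFx c (fun _ => 1) v Y,
        \bigcup_(l < 3) Y l \subset \bigcup_(l < 3) X l &
        exists i j k : 'I_3,
          [/\ [&& i != j, j != k & i != k],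
              setval (v i) (Y i) >= setval (v i) (X i) / 9%:R - s i / 3%:R,
              setval (v j) (Y j) >= setval (v j) (X j) / 9%:R - 2%:R * s j / 3%:R &
              setval (v k) (Y k) >= setval (v k) (X k) / 9%:R - s k]].
Proof.
move=> cpos vpos alloc bud spos sbound.
pose P := fun F : {ffun 'I_3 -> {set G}} =>
  [/\ is_allocation (fun l => F l), budget_feasible c (fun _ => 1) (fun l => F l),
      EFx c (fun _ => 1) v (fun l => F l) & \bigcup_(l < 3) F l \subset \bigcup_(l < 3) X l].
have P0 : P [ffun => set0].
  split.
  - by move=> a b _; apply: disj_intro => x; rewrite ffunE inE.
  - by move=> l; rewrite ffunE /setval big_set0 ler01.
  - by move=> a b _ S; rewrite ffunE => /subsetP S0 _ g /S0; rewrite inE.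
  - by apply/bigcupsP => l _; rewrite ffunE sub0set.
have [F [PF Fmax]] := ex_max (fun F : {ffun 'I_3 -> {set G}} => \sum_(l < 3) setval (v l) (F l)) P0.
case: PF => Falloc Fbud FEFx Fsub.
have Fin : forall l g, g \in F l -> g \in \bigcup_(l < 3) X l.
  by move=> l g gF; apply: (subsetP Fsub); apply/bigcupP; exists l.
have cmono : forall A B : {set G}, A \subset B -> setval c A <= setval c B.
  by move=> A B; apply: setval_sub => g; exact: ltW.
have envy : forall i j, setval (v i) (F j) <= setval (v i) (F i) + s i.
  move=> i j; have [->|ij] := eqVneq j i; first by rewrite lerDl.
  have [->|[g gF]] := set_0Vmem (F j).
    by rewrite /setval big_set0 addr_ge0 // setval_ge0.
  rewrite (setvalD1 _ gF) addrC lerD //; last exact: sbound (Fin j g gF).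
  have ij' : i != j by rewrite eq_sym.
  exact: (FEFx i j ij' (F j) (subxx _) (Fbud j) g gF).
pose U := \bigcup_(l < 3) F l.
have pool : forall i, setval (v i) (X i :\: U) <= setval (v i) (F i).
  move=> i; rewrite leNgt; apply/negP => hlt.
  pose Z := X i :\: U.
  pose Q := fun S : {set G} => S \subset Z /\ exists h, setval (v h) (F h) < setval (v h) S.
  have QZ : Q Z by split => //; exists i.
  have [Z' [[Z'Z [h hZ']] Zmin]] := ex_max (fun S : {set G} => - (#|S|%:R : R)) QZ.
  have Z'X : Z' \subset X i by apply: subset_trans Z'Z (subsetDl _ _).
  have Z'F : forall l x, x \in Z' -> x \in F l -> False.
    move=> l x xZ xF; move: (subsetP Z'Z x xZ); rewrite inE => /andP [/negP xU _].
    by apply: xU; apply/bigcupP; exists l.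
  pose F' := [ffun l => if l == h then Z' else F l].
  have PF' : P F'.
    split.
    - move=> a b ab; rewrite /F' !ffunE.
      case: ifP => [/eqP ah|_]; case: ifP => [/eqP bh|_].
      + by move: ab; rewrite ah bh eqxx.
      + by apply: disj_intro => x; apply: Z'F.
      + by apply: disj_intro => x xF xZ; apply: Z'F xZ xF.
      + exact: Falloc.
    - move=> l; rewrite /F' ffunE; case: ifP => _; last exact: Fbud.
      exact: le_trans (cmono _ _ Z'X) (bud i).
    - move=> a b ab S; rewrite /F' !ffunE.
      case: ifP => [/eqP bh|/negbT bh].
      + have ah : (a == h) = false by apply/negbTE; rewrite -bh.
        rewrite ah => SZ' _ g gS; rewrite leNgt; apply/negP => hlt'.
        have QS : Q (S :\ g).
          split; last by exists a.
          exact: subset_trans (subD1set _ _) (subset_trans SZ' Z'Z).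
        have := Zmin _ QS; rewrite lerN2 ler_nat leqNgt => /negP; apply.
        apply: proper_card; apply/properP; split.
          exact: subset_trans (subD1set _ _) SZ'.
        by exists g; [exact: (subsetP SZ') | rewrite setD11].
      + case: ifP => [/eqP ah|_]; last exact: FEFx.
        move=> SF cS g gS; subst a.
        have hb : h != b by rewrite eq_sym.
        exact: le_trans (FEFx h b hb S SF cS g gS) (ltW hZ').
    - apply/bigcupsP => l _; rewrite /F' ffunE; case: ifP => _.
        exact: subset_trans Z'X (bigcup_sup i isT).
      exact: subset_trans (bigcup_sup l isT) Fsub.
  have := Fmax F' PF'; rewrite leNgt => /negP; apply.
  rewrite (bigD1 h) //= [X in _ < X](bigD1 h) //= /F' ffunE eqxx.
  have -> : \sum_(l < 3 | l != h) setval (v l) ([ffun l0 => if l0 == h then Z' else F l0] l)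
          = \sum_(l < 3 | l != h) setval (v l) (F l).
    by apply: eq_bigr => l /negbTE lh; rewrite ffunE lh.
  by rewrite ltrD2r.
have bound : forall i, setval (v i) (X i) <= 4%:R * setval (v i) (F i) + 3%:R * s i.
  move=> i.
  have h1 : X i \subset (X i :\: U) :|: U.
    by apply/subsetP => g gX; rewrite in_setU in_setD gX andbT; case: (g \in U).
  have hU : setval (v i) U <= \sum_(l < 3) setval (v i) (F l).
    rewrite /U; elim/big_rec2: _ => [|l A y _ hA]; first by rewrite /setval big_set0.
    apply: le_trans (setvalU _ _ (vpos i)) _; by rewrite lerD2l.
  have hS : \sum_(l < 3) setval (v i) (F l) <= \sum_(l < 3) (setval (v i) (F i) + s i).
    by apply: ler_sum => l _; exact: envy.
  rewrite !big_ord_recr !big_ord0 /= in hS hU.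
  have := setval_sub (vpos i) h1; have := setvalU (X i :\: U) U (vpos i).
  have := pool i; lra.
exists (fun l => F l); split; [exact: Falloc|exact: Fbud|exact: FEFx|exact: Fsub|].
have fin : forall i, setval (v i) (X i) / 9%:R - s i / 3%:R <= setval (v i) (F i).
  move=> i; have := bound i; have := setval_ge0 (F i) (vpos i); have := spos i; lra.
exists (@Ordinal 3 0 isT), (@Ordinal 3 1 isT), (@Ordinal 3 2 isT); split.
- by [].
- exact: fin.
- apply: le_trans (fin _); have := spos (@Ordinal 3 1 isT); lra.
- apply: le_trans (fin _); have := spos (@Ordinal 3 2 isT); lra.
Qed.
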